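(* Let $\pi:P\to M$ be a principal fibre bundle with group $G=P^{-1}P$, in the setting described in the context. There is a bijective correspondence $\theta\leftrightarrow\alpha$ between horizontal equivariant $G$-valued $k$-forms $\theta$ on $P$ and $\mathbf{gauge}(PP^{-1})$-valued $k$-forms $\alpha$ on $M$, characterized by $$u_0\cdot\theta(u_0,\dots,u_k)=\alpha(\pi(u_0),\dots,\pi(u_k))\cdot u_0$$ for every infinitesimal $k$-simplex $(u_0,\dots,u_k)$ in $P$; explicitly $\alpha(a_0,\dots,a_k)=(u_0\theta(u_0,\dots,u_k))u_0^{-1}$ for any infinitesimal $k$-simplex $(u_0,\dots,u_k)$ in $P$ lying over $(a_0,\dots,a_k)$, and $\theta(u_0,\dots,u_k)=u_0^{-1}(\alpha(\pi(u_0),\dots,\pi(u_k))u_0)$.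
   Context: Setting: $\Phi$ is a groupoid whose object set contains a set $M$ and an object $*\notin M$; $P$ is the set of arrows of $\Phi$ with domain $*$ and codomain in $M$; $\pi:P\to M$ is the codomain map; $G=P^{-1}P:=\Phi( *,* )$ acts on $P$ from the right by precomposition, freely and transitively on fibres; for $x,z$ in one fibre, $x^{-1}z\in G$ is computed in $\Phi$. $PP^{-1}$ is the full subgroupoid of $\Phi$ on $M$ (arrows are composites $yx^{-1}$), acting on $P$ from the left by postcomposition. Composition is right to left. $M$ and $P$ carry reflexive symmetric neighbour relations $\sim$; an infinitesimal $k$-simplex is a $(k+1)$-tuple of mutual neighbours; $\pi$ preserves $\sim$; for every infinitesimal $k$-simplex $(a_0,\dots,a_k)$ in $M$ and every $x_0$ over $a_0$ there is an infinitesimal $k$-simplex in $P$ starting at $x_0$ lying over it; the right action of each $g\in G$ preserves $\sim$. The gauge group bundle $\mathbf{gauge}(PP^{-1})$ is the group bundle over $M$ whose fibre over $a$ is the group $PP^{-1}(a,a)$ of endo-arrows at $a$. A $\mathbf{gauge}(PP^{-1})$-valued $k$-form on $M$ assigns to each infinitesimal $k$-simplex $(a_0,\dots,a_k)$ in $M$ an element of $PP^{-1}(a_0,a_0)$. A $G$-valued $k$-form on $P$ assigns an element of $G$ to each infinitesimal $k$-simplex in $P$; it is horizontal if $\theta(u_0,u_1,\dots,u_k)=\theta(u_0,u_1g_1,\dots,u_kg_k)$ whenever $(u_0,u_1g_1,\dots,u_kg_k)$ is still an infinitesimal simplex, and equivariant if $\theta(u_0g,\dots,u_kg)=g^{-1}\theta(u_0,\dots,u_k)g$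 for all infinitesimal $k$-simplices and all $g\in G$. *)

(* Defs.v *)
From mathcomp Require Import all_boot.

Set Implicit Arguments.
Unset Strict Implicit.
Unset Printing Implicit Defensive.

(* A groupoid presented by its objects, arrows, domain/codomain maps and a
   total composition operation which is only meaningful on composable pairs.
   Composition is right to left: [comp g f] is "g after f", defined when
   [dom g = cod f]. *)
Record Groupoid := {
  Ob : Type;
  Ar : Type;
  dom : Ar -> Ob;
  cod : Ar -> Ob;
  idA : Ob -> Ar;
  comp : Ar -> Ar -> Ar;
  inv : Ar -> Ar;
  dom_id : forall a, dom (idA a) = a;
  cod_id : forall a, cod (idA a) = a;
  dom_comp : forall g f, dom g = cod f -> dom (comp g f) = dom f;
  cod_comp : forall g f, dom g = cod f -> cod (comp g f) = cod g;
  compA : forall h g f, dom h = cod g -> dom g = cod f ->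
            comp h (comp g f) = comp (comp h g) f;
  comp_id_l : forall f, comp (idA (cod f)) f = f;
  comp_id_r : forall f, comp f (idA (dom f)) = f;
  dom_inv : forall f, dom (inv f) = cod f;
  cod_inv : forall f, cod (inv f) = dom f;
  inv_l : forall f, comp (inv f) f = idA (dom f);
  inv_r : forall f, comp f (inv f) = idA (cod f)
}.

(* The setting of the paper: a groupoid Phi, a set M of objects, an object
   star not in M, P = arrows star -> M, pi = cod, G = Phi(star,star),
   neighbour relations on M and on P with the stated properties. *)
Record PBSetting := {
  Phi : Groupoid;
  Mset : Ob Phi -> Prop;
  star : Ob Phi;
  star_notin_M : ~ Mset star;
  nbM : Ob Phi -> Ob Phi -> Prop;
  nbP : Ar Phi -> Ar Phi -> Prop
}.

Section Defs.
Variable S : PBSetting.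
Local Notation A := (Ar (Phi S)).
Local Notation O := (Ob (Phi S)).
Local Notation comp := (@comp (Phi S)).
Local Notation inv := (@inv (Phi S)).
Local Notation dom := (@dom (Phi S)).
Local Notation cod := (@cod (Phi S)).

Definition inP (x : A) : Prop := dom x = @star S /\ @Mset S (cod x).
Definition inG (g : A) : Prop := dom g = @star S /\ cod g = @star S.
Definition bproj (x : A) : O := cod x.
Definition inGauge (a : O) (f : A) : Prop := dom f = a /\ cod f = a.

Definition simplexM (k : nat) (a : 'I_k.+1 -> O) : Prop :=
  (forall i, @Mset S (a i)) /\ (forall i j, @nbM S (a i) (a j)).
Definition simplexP (k : nat) (u : 'I_k.+1 -> A) : Prop :=
  (forall i, inP (u i)) /\ (forall i j, @nbP S (u i) (u j)).

Definition setting_axioms : Prop :=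
  (forall a, @Mset S a -> @nbM S a a) /\
  (forall a b, @nbM S a b -> @nbM S b a) /\
  (forall x, inP x -> @nbP S x x) /\
  (forall x y, @nbP S x y -> @nbP S y x) /\
  (forall x y, inP x -> inP y -> @nbP S x y -> @nbM S (bproj x) (bproj y)) /\
  (forall k (a : 'I_k.+1 -> O) (x0 : A), simplexM a -> inP x0 ->
     bproj x0 = a ord0 ->
     exists u : 'I_k.+1 -> A, simplexP u /\ u ord0 = x0 /\
                              forall i, bproj (u i) = a i) /\
  (forall g x y, inG g -> inP x -> inP y -> @nbP S x y ->
     @nbP S (comp x g) (comp y g)).

Definition pi_surjective : Prop :=
  forall a, @Mset S a -> exists x, inP x /\ bproj x = a.

Definition G_form (k : nat) (theta : ('I_k.+1 -> A) -> A) : Prop :=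
  forall u, simplexP u -> inG (theta u).
Definition gauge_form (k : nat) (alpha : ('I_k.+1 -> O) -> A) : Prop :=
  forall a, simplexM a -> inGauge (a ord0) (alpha a).

Definition act_tail (k : nat) (u g : 'I_k.+1 -> A) : 'I_k.+1 -> A :=
  fun i => if nat_of_ord i == 0 then u i else comp (u i) (g i).

Definition horizontal (k : nat) (theta : ('I_k.+1 -> A) -> A) : Prop :=
  forall (u g : 'I_k.+1 -> A), simplexP u -> (forall i, inG (g i)) ->
    simplexP (act_tail u g) -> theta u = theta (act_tail u g).

Definition equivariant (k : nat) (theta : ('I_k.+1 -> A) -> A) : Prop :=
  forall (u : 'I_k.+1 -> A) (g : A), simplexP u -> inG g ->
    theta (fun i => comp (u i) g) = comp (inv g) (comp (theta u) g).

Definition hor_equiv_form (k : nat) (theta : ('I_k.+1 -> A) -> A) : Prop :=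
  G_form theta /\ horizontal theta /\ equivariant theta.

Definition corresponds (k : nat) (theta : ('I_k.+1 -> A) -> A)
    (alpha : ('I_k.+1 -> O) -> A) : Prop :=
  forall u, simplexP u ->
    comp (u ord0) (theta u) = comp (alpha (fun i => bproj (u i))) (u ord0).

(* forms are functions on infinitesimal simplices: equality of forms *)
Definition eq_formP (k : nat) (t1 t2 : ('I_k.+1 -> A) -> A) : Prop :=
  forall u, simplexP u -> t1 u = t2 u.
Definition eq_formM (k : nat) (a1 a2 : ('I_k.+1 -> O) -> A) : Prop :=
  forall a, simplexM a -> a1 a = a2 a.

End Defs.

(* Main.v *)
Require Import Defs.
From mathcomp Require Import all_boot.
From Stdlib Require Import ClassicalEpsilon FunctionalExtensionality.

Notation gc := Defs.comp.
Notation gi := Defs.inv.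
Notation gd := Defs.dom.
Notation gk := Defs.cod.

Ltac dcs :=
  repeat match goal with
  | |- context [gd (gi ?f)] => rewrite (Defs.dom_inv f)
  | |- context [gk (gi ?f)] => rewrite (Defs.cod_inv f)
  | |- context [gd (Defs.idA ?a)] => rewrite (Defs.dom_id a)
  | |- context [gk (Defs.idA ?a)] => rewrite (Defs.cod_id a)
  | |- context [gd (gc ?g ?f)] =>
      let E := fresh in (have E : gd (gc g f) = gd f by (apply: Defs.dom_comp; dcs)); rewrite E; clear E
  | |- context [gk (gc ?g ?f)] =>
      let E := fresh in (have E : gk (gc g f) = gk g by (apply: Defs.cod_comp; dcs)); rewrite E; clear E
  end; try congruence.

Ltac assocl :=
  repeat match goal with
  | |- context [gc ?h (gc ?g ?f)] =>
      let E := fresh in (have E : gc h (gc g f) = gc (gc h g) f by (apply: Defs.compA; dcs)); rewrite E; clear E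
  end.

Section G.
Variable G : Groupoid.
Implicit Types f g x : Ar G.

Lemma L1 f x : gd f = gk x -> gc (gc f x) (gi x) = f.
Proof. move=> H. rewrite -Defs.compA; [|by []|by rewrite Defs.cod_inv]. by rewrite Defs.inv_r -H Defs.comp_id_r. Qed.
Lemma L2 x f : gd x = gk f -> gc (gi x) (gc x f) = f.
Proof. move=> H. rewrite Defs.compA; [|by rewrite Defs.dom_inv|by []]. by rewrite Defs.inv_l H Defs.comp_id_l. Qed.
Lemma L3 f x : gd f = gd x -> gc (gc f (gi x)) x = f.
Proof. move=> H. rewrite -Defs.compA; [|by rewrite Defs.cod_inv|by rewrite Defs.dom_inv]. by rewrite Defs.inv_l -H Defs.comp_id_r. Qed.
Lemma L4 x f : gk x = gk f -> gc x (gc (gi x) f) = f.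
Proof. move=> H. rewrite Defs.compA; [|by rewrite Defs.cod_inv|by rewrite Defs.dom_inv]. by rewrite Defs.inv_r H Defs.comp_id_l. Qed.
Lemma inv_comp (a b : Ar G) : gd a = gk b -> gi (gc a b) = gc (gi b) (gi a).
Proof.
move=> H.
have E : gc (gc a b) (gc (gi b) (gi a)) = Defs.idA (gk (gc a b)).
  rewrite -Defs.compA; [|by []|by rewrite Defs.cod_comp ?Defs.cod_inv // Defs.dom_inv].
  rewrite (@Defs.compA _ b (gi b) (gi a)); [|by rewrite Defs.cod_inv|by rewrite Defs.dom_inv Defs.cod_inv].
  rewrite Defs.inv_r -H -(Defs.cod_inv a) Defs.comp_id_l Defs.inv_r Defs.cod_comp //.
rewrite -[gi (gc a b)]Defs.comp_id_r Defs.dom_inv -E L2 //.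
by rewrite Defs.dom_comp // Defs.cod_comp ?Defs.cod_inv // Defs.dom_inv.
Qed.
Lemma rcancel f f' x : gc f x = gc f' x -> gd f = gk x -> gd f' = gk x -> f = f'.
Proof. by move=> E H1 H2; rewrite -(@L1 f x H1) -(@L1 f' x H2) E. Qed.
End G.

Ltac canc :=
  repeat match goal with
  | |- context [gc (gc ?f ?x) (gi ?x)] =>
      let E := fresh in (have E : gc (gc f x) (gi x) = f by (apply: L1; dcs)); rewrite E; clear E
  | |- context [gc (gc ?f (gi ?x)) ?x] =>
      let E := fresh in (have E : gc (gc f (gi x)) x = f by (apply: L3; dcs)); rewrite E; clear E
  end.
Section Main.
Variable S : PBSetting.
Variable k : nat.
Hypothesis ax : setting_axioms S.
Local Notation A := (Ar (Phi S)).
Local Notation O := (Ob (Phi S)).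

Lemma projM (u : 'I_k.+1 -> A) : simplexP u -> simplexM (fun i => bproj (u i)).
Proof.
case: ax => _ [_ [_ [_ [Hpi _]]]] [Hin Hnb]; split => [i|i j].
  by case: (Hin i).
by apply: Hpi.
Qed.

Lemma explicit (theta : ('I_k.+1 -> A) -> A) (alpha : ('I_k.+1 -> O) -> A) :
  hor_equiv_form theta -> gauge_form alpha -> corresponds theta alpha ->
  forall u, simplexP u ->
    alpha (fun i => bproj (u i)) = gc (gc (u ord0) (theta u)) (gi (u ord0)) /\
    theta u = gc (gi (u ord0)) (gc (alpha (fun i => bproj (u i))) (u ord0)).
Proof.
move=> [Gt _] Ga C u Hu.
have [Ha1 Ha2] := Ga _ (projM _ Hu).
have [Ht1 Ht2] := Gt _ Hu.
have [[Hu1 _] _] := (proj1 Hu ord0, 0).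
split.
  rewrite C // L1 //; by rewrite Ha1.
rewrite -C // L2 //; by rewrite Ht2.
Qed.

Lemma key (theta : ('I_k.+1 -> A) -> A) : hor_equiv_form theta ->
  forall u v, simplexP u -> simplexP v -> (forall i, bproj (u i) = bproj (v i)) ->
  gc (u ord0) (theta u) = gc (gc (gc (v ord0) (theta v)) (gi (v ord0))) (u ord0).
Proof.
move=> [Gt [Hh He]] u v Hu Hv E.
have [_ [_ [_ [_ [_ [_ Hact]]]]]] := ax.
case: (Hu) => Huin Hunb; case: (Hv) => Hvin Hvnb.
have [Hu0 _] := Huin ord0; have [Hv0 _] := Hvin ord0.
have E0 := E ord0; rewrite /bproj in E0.
have [Htv1 Htv2] := Gt _ Hv.
pose g := gc (gi (v ord0)) (u ord0).
have Hg : inG g by split; rewrite /g; dcs.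
case: (Hg) => Hg1 Hg2.
have Hug : u ord0 = gc (v ord0) g by rewrite /g L4.
pose u' := fun i => gc (v i) g.
have Hu' : simplexP u'.
  split => [i|i j].
    have [? ?] := Hvin i; split; rewrite /u'; dcs; done.
  by rewrite /u'; apply: Hact.
pose h := fun i => gc (gi (u' i)) (u i).
have Hhg : forall i, inG (h i).
  move=> i; have [? ?] := Huin i; have [? ?] := Hvin i.
  have := E i; rewrite /bproj => Ei; split; rewrite /h /u'; dcs.
have Hat : act_tail u' h = u.
  apply: functional_extensionality => i; rewrite /act_tail.
  case: eqP => [i0|_].
    have -> : i = ord0 by apply: val_inj.
    by rewrite /u' -Hug.
  have [? ?] := Huin i; have [? ?] := Hvin i.
  have := E i; rewrite /bproj => Ei.
  rewrite /h L4 //; rewrite /u'; dcs.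
have T1 : theta u' = theta u.
  rewrite -{1}Hat; apply: Hh => //; by rewrite Hat.
have T3 : theta u = gc (gi g) (gc (theta v) g).
  rewrite -T1; exact: He.
rewrite T3 Hug.
assocl; canc; reflexivity.
Qed.

Definition thetaOf (alpha : ('I_k.+1 -> O) -> A) (u : 'I_k.+1 -> A) : A :=
  gc (gi (u ord0)) (gc (alpha (fun i => bproj (u i))) (u ord0)).

Lemma thetaOf_ok alpha : gauge_form alpha ->
  hor_equiv_form (thetaOf alpha) /\ corresponds (thetaOf alpha) alpha.
Proof.
move=> Ga; split; last first.
  move=> u Hu; have [Ha1 Ha2] := Ga _ (projM _ Hu).
  rewrite /thetaOf; set a := alpha _ in Ha1 Ha2 *; rewrite /bproj in Ha1 Ha2.
  rewrite L4 //; dcs.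
split; [|split].
- move=> u Hu; have [Ha1 Ha2] := Ga _ (projM _ Hu).
  have [[Hu0 _] _] := (proj1 Hu ord0, 0).
  rewrite /thetaOf.
  set a := alpha _ in Ha1 Ha2 *; rewrite /bproj in Ha1 Ha2.
  split; dcs.
- move=> u g Hu Hg Hug; rewrite /thetaOf.
  have -> : act_tail u g ord0 = u ord0 by rewrite /act_tail.
  have -> : (fun i => bproj (act_tail u g i)) = (fun i => bproj (u i)).
    apply: functional_extensionality => i; rewrite /act_tail.
    case: eqP => // _; rewrite /bproj.
    have [[? ?] _] := (proj1 Hu i, 0); have [? ?] := Hg i.
    apply: Defs.cod_comp; dcs.
  done.
- move=> u g Hu Hg; rewrite /thetaOf /=.
  have [Hg1 Hg2] := Hg.
  have -> : (fun i => bproj (gc (u i) g)) = (fun i => bproj (u i)).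
    apply: functional_extensionality => i; rewrite /bproj.
    have [[? ?] _] := (proj1 Hu i, 0).
    apply: Defs.cod_comp; dcs.
  have [Ha1 Ha2] := Ga _ (projM _ Hu).
  have [[Hu0 _] _] := (proj1 Hu ord0, 0).
  set a := alpha _ in Ha1 Ha2 *; rewrite /bproj in Ha1 Ha2.
  have -> : gi (gc (u ord0) g) = gc (gi g) (gi (u ord0)) by apply: inv_comp; dcs.
  assocl; reflexivity.
Qed.

End Main.

Theorem proposition3 (S : PBSetting) (k : nat) :
  setting_axioms S -> pi_surjective S ->
  (* theta |-> alpha: existence and uniqueness *)
  (forall theta : ('I_k.+1 -> Ar (Phi S)) -> Ar (Phi S),
     hor_equiv_form theta ->
     exists alpha : ('I_k.+1 -> Ob (Phi S)) -> Ar (Phi S),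
       gauge_form alpha /\ corresponds theta alpha /\
       forall alpha', gauge_form alpha' -> corresponds theta alpha' ->
                      eq_formM alpha alpha') /\
  (* alpha |-> theta: existence and uniqueness *)
  (forall alpha : ('I_k.+1 -> Ob (Phi S)) -> Ar (Phi S),
     gauge_form alpha ->
     exists theta : ('I_k.+1 -> Ar (Phi S)) -> Ar (Phi S),
       hor_equiv_form theta /\ corresponds theta alpha /\
       forall theta', hor_equiv_form theta' -> corresponds theta' alpha ->
                      eq_formP theta theta') /\
  (* explicit formulas *)
  (forall (theta : ('I_k.+1 -> Ar (Phi S)) -> Ar (Phi S))
          (alpha : ('I_k.+1 -> Ob (Phi S)) -> Ar (Phi S)),
     hor_equiv_form theta -> gauge_form alpha -> corresponds theta alpha ->
     forall u, simplexP u ->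
       alpha (fun i => bproj (u i)) =
         @Defs.comp (Phi S) (@Defs.comp (Phi S) (u ord0) (theta u)) (@Defs.inv (Phi S) (u ord0)) /\
       theta u =
         @Defs.comp (Phi S) (@Defs.inv (Phi S) (u ord0))
              (@Defs.comp (Phi S) (alpha (fun i => bproj (u i))) (u ord0))).
Proof.
move=> ax surj.
split; [|split]; last first.
  move=> theta alpha Ht Ga C u Hu; exact: (explicit _ _ ax _ _ Ht Ga C _ Hu).
  move=> alpha Ga; exists (thetaOf _ _ alpha).
  have [H1 H2] := thetaOf_ok _ _ ax _ Ga.
  split; [done|split; [done|]].
  move=> theta' Ht' C' u Hu; rewrite /thetaOf.
  symmetry; exact: (proj2 (explicit _ _ ax _ _ Ht' Ga C' _ Hu)).
move=> theta Ht.
have [_ [_ [_ [_ [_ [liftax _]]]]]] := ax.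
pose inh := inhabits (fun _ : 'I_k.+1 => Defs.idA (star S)).
pose lift a := epsilon inh (fun v => simplexP v /\ forall i, bproj (v i) = a i).
pose alpha a := gc (gc (lift a ord0) (theta (lift a))) (gi (lift a ord0)).
have Hlift : forall a, simplexM a -> simplexP (lift a) /\ forall i, bproj (lift a i) = a i.
  move=> a Ha; rewrite /lift; apply: (epsilon_spec inh (fun v => simplexP v /\ forall i, bproj (v i) = a i)).
  have [x [Hx Hxa]] := surj _ (proj1 Ha ord0).
  have [u [Hu [Hu0 Hua]]] := liftax k a x Ha Hx Hxa.
  by exists u.
have Corr : corresponds theta alpha.
  move=> u Hu; have [Hv Hva] := Hlift _ (projM _ _ ax _ Hu).
  rewrite /alpha; apply: (key _ _ ax) => // i; by rewrite Hva.
have Galpha : gauge_form alpha.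
  move=> a Ha; have [Hv Hva] := Hlift _ Ha.
  have := Hva ord0; rewrite /bproj => E0.
  have [[Hv0 _] _] := (proj1 Hv ord0, 0).
  have [Ht1 Ht2] := proj1 Ht _ Hv.
  rewrite /alpha; split; dcs.
exists alpha; split; [done|split; [done|]].
move=> alpha' Ga' C' a Ha.
have [Hv Hva] := Hlift _ Ha.
have Ea : a = fun i => bproj (lift a i) by apply: functional_extensionality => i; rewrite Hva.
rewrite Ea.
have [Hv0 _] := proj1 Hv ord0.
have [G1 _] := Galpha _ (projM _ _ ax _ Hv).
have [G1' _] := Ga' _ (projM _ _ ax _ Hv).
apply: (@rcancel _ _ _ (lift a ord0)).
- by rewrite -Corr // -C'.
- by rewrite G1.
- by rewrite G1'.
Qed.
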